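(* For any cardinality $\kappa$, $\Delta_{c_0^+(\kappa)}^{(c)}(R)=R$ for all $R\in[0,\infty)$.
   Context: For a cardinal $\kappa$, $c_0(\kappa)$ is the space of real families $(x_\xi)_{\xi<\kappa}$ such that $\{\xi: |x_\xi|>\eta\}$ is finite for every $\eta>0$, with the sup norm, and $c_0^+(\kappa)=\{x\in c_0(\kappa): x_\xi\geq0\ \forall\xi\}$ with the inherited metric. For a metric space $X$ and a cover $\mathcal{U}$ of $X$: $\mathrm{diam}(\mathcal{U})=\sup_{U\in\mathcal{U}}\mathrm{diam}(U)$; $\mathcal{L}(\mathcal{U})=\sup\{d\in[0,\infty): \text{every } E\subseteq X \text{ with } \mathrm{diam}(E)<d \text{ is contained in some } U\in\mathcal{U}\}$; $\mathcal{U}$ is point-finite if each point lies in only finitely many members. $\Delta_X^{(c)}(R)=\inf\{\mathrm{diam}(\mathcal{U}): \mathcal{U} \text{ a point-finite cover of } X,\ \mathcal{L}(\mathcal{U})\geq R\}$. *)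

(* Defs.v *)
From HB Require Import structures.
From mathcomp Require Import all_boot all_order all_algebra.
From mathcomp Require Import all_classical all_reals.
From mathcomp Require Import ereal.
Set Implicit Arguments. Unset Strict Implicit. Unset Printing Implicit Defensive.
Import Order.TTheory GRing.Theory Num.Theory.
Local Open Scope classical_set_scope.
Local Open Scope ring_scope.

Section Defs.
Context {R : realType}.

(** Generic notions for a "metric space" given as a subset [X] of a type [T]
    equipped with a distance [d : T -> T -> \bar R]. *)
Section Generic.
Context {T : Type} (d : T -> T -> \bar R) (X : set T).

(* diameter of a set, with diam(empty) = 0 *)
Definition diam (E : set T) : \bar R :=
  ereal_sup ([set 0%E] `|` [set d x y | x in E & y in E]).

Definition cover_diam (U : set (set T)) : \bar R :=
  ereal_sup ([set 0%E] `|` [set diam A | A in U]).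

Definition is_cover (U : set (set T)) : Prop :=
  (forall A, U A -> A `<=` X) /\ X `<=` \bigcup_(A in U) A.

Definition point_finite (U : set (set T)) : Prop :=
  forall x, X x -> finite_set [set A | U A /\ A x].

Definition lebesgue_number (U : set (set T)) : \bar R :=
  ereal_sup [set (r%:E)%E | r in [set r : R | 0 <= r /\
     forall E, E `<=` X -> (diam E < r%:E)%E -> exists2 A, U A & E `<=` A]].

Definition Delta_c (r : R) : \bar R :=
  ereal_inf [set cover_diam U | U in
    [set U | is_cover U /\ point_finite U /\ (r%:E <= lebesgue_number U)%E]].

End Generic.

(** c_0^+(K): nonnegative families indexed by K vanishing at infinity,
    with the sup-norm distance. *)
Definition c0plus (K : Type) : set (K -> R) :=
  [set x | (forall k, 0 <= x k) /\
           forall eta : R, 0 < eta -> finite_set [set k | eta < `|x k|]].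

Definition sup_dist (K : Type) (x y : K -> R) : \bar R :=
  ereal_sup ([set 0%E] `|` [set (`|x k - y k|)%:E | k in [set: K]]).

End Defs.

(* Main.v *)
Require Import Defs.
From HB Require Import structures.
From mathcomp Require Import all_boot all_order all_algebra.
From mathcomp Require Import all_classical all_reals.
From mathcomp Require Import ereal lra.
Import Order.TTheory GRing.Theory Num.Theory.
Local Open Scope ring_scope.

Section Helpers.
Context {R : realType} {K : Type}.
Local Notation d := (@sup_dist R K).
Local Open Scope classical_set_scope.

Lemma sd_le (x y : K -> R) t : 0 <= t -> (forall k, `|x k - y k| <= t) ->
  (d x y <= t%:E)%E.
Proof.
move=> t0 H; apply: ge_ereal_sup => _ [->|[k _ <-]]; rewrite lee_fin //.
Qed.

Lemma sd_ge (x y : K -> R) k : (`|x k - y k|%:E <= d x y)%E.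
Proof. by apply: ereal_sup_ubound; right; exists k. Qed.

Lemma diam_le (E : set (K -> R)) t : 0 <= t ->
  (forall x y, E x -> E y -> forall k, `|x k - y k| <= t) ->
  (diam d E <= t%:E)%E.
Proof.
move=> t0 H; apply: ge_ereal_sup => _ [->|[x Ex [y Ey <-]]]; first by rewrite lee_fin.
by apply: sd_le => // k; apply: H.
Qed.

Lemma diam_ge (E : set (K -> R)) x y : E x -> E y -> (d x y <= diam d E)%E.
Proof. by move=> Ex Ey; apply: ereal_sup_ubound; right; exists x => //; exists y. Qed.

Arguments diam_ge {E x y}.

Lemma diam_ge0 (E : set (K -> R)) : (0 <= diam d E)%E.
Proof. by apply: ereal_sup_ubound; left. Qed.

Lemma cdiam_ge (U : set (set (K -> R))) A : U A -> (diam d A <= cover_diam d U)%E.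
Proof. by move=> UA; apply: ereal_sup_ubound; right; exists A. Qed.

Arguments cdiam_ge {U A}.

Lemma cdiam_ge0 (U : set (set (K -> R))) : (0 <= cover_diam d U)%E.
Proof. by apply: ereal_sup_ubound; left. Qed.

Lemma fin_funs (b : K -> nat) (f : nat -> K) m :
  finite_set [set n : K -> nat | (forall j, ~ (f @` `I_m) j -> n j = 0%N) /\
     forall j, (n j <= b j)%N].
Proof.
elim: m => [|m IH].
  apply: (sub_finite_set _ (finite_set1 (fun _ => 0%N))) => n [H _].
  by apply/funext => j; apply: H => -[i Hi _]; move: Hi; rewrite /= ltn0.
set k := f m.
pose upd (p : (K -> nat) * nat) := fun j => if pselect (j = k) then p.2 else p.1 j.
apply: (sub_finite_set _ (finite_image upd (finite_setX IH (finite_II (b k).+1)))).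
move=> n [H1 H2]; exists ((fun j => if pselect (j = k) then 0%N else n j), n k).
  split => /=.
    split => j; last by destruct (pselect (j = k)) => //; exact: H2.
    destruct (pselect (j = k)) as [|jk] => // nj; apply: H1 => -[i /= Hi fij].
    move: Hi; rewrite ltnS leq_eqVlt => /orP[/eqP im|im].
      by apply: jk; rewrite -fij im.
    by apply: nj; exists i.
  by rewrite /= ltnS.
by apply/funext => j; rewrite /upd /=; destruct (pselect (j = k)) as [->|].
Qed.

Local Notation X := (@c0plus R K).

Lemma floor_box (a y : R) : 0 < a -> 0 <= y ->
  (Num.truncn (y / a))%:R * a <= y /\ y < (Num.truncn (y / a))%:R * a + a.
Proof.
move=> a0 y0; have /andP[h1 h2] := truncn_itv (divr_ge0 y0 (ltW a0)).
split; first by rewrite -ler_pdivlMr.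
by move: h2; rewrite ltr_pdivrMr // -natr1 mulrDl mul1r.
Qed.

Definition Box (a r : R) (n : K -> nat) : set (K -> R) :=
  [set x | X x /\ forall k, (n k)%:R * a <= x k <= (n k)%:R * a + r + a].
Definition Ucov (a r : R) := [set A | exists n, A = Box a r n].

Lemma Ucov_cover a r : 0 < a -> 0 <= r -> is_cover X (Ucov a r).
Proof.
move=> a0 r0; split; first by move=> A [n ->] x [].
move=> x Xx; exists (Box a r (fun k => Num.truncn (x k / a))); first by eexists.
split => // k; have [h1 h2] := @floor_box _ _ a0 (Xx.1 k).
by apply/andP; split => //; lra.
Qed.

Lemma Ucov_diam a r : 0 < a -> 0 <= r -> (cover_diam d (Ucov a r) <= (r + a)%:E)%E.
Proof.
move=> a0 r0; apply: ge_ereal_sup => _ [->|[A [n ->] <-]].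
  by rewrite lee_fin; lra.
apply: diam_le; first lra.
move=> x y [_ Hx] [_ Hy] k; have /andP[? ?] := Hx k; have /andP[? ?] := Hy k.
rewrite ler_norml; apply/andP; split; lra.
Qed.

Lemma Ucov_pf a r (k0 : K) : 0 < a -> point_finite X (Ucov a r).
Proof.
move=> a0 x Xx.
have Ffin : finite_set [set k | a / 2 < `|x k|] by apply: Xx.2; rewrite divr_gt0.
have [m [f Ff]] : exists m (f : nat -> K), [set k | a / 2 < `|x k|] `<=` f @` `I_m.
  have [F0|F0] := pselect ([set k | a / 2 < `|x k|] = set0).
    by exists 0%N, (fun _ => k0); rewrite F0.
  have [m hm] := Ffin.
  have [g _] := @finite_set_bij _ _ m _ (introN eqP F0) hm (@subset_refl _ [set k | a / 2 < `|x k|]).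
  by exists m, g; exact: surj.
pose b k := Num.truncn (x k / a).
apply: (sub_finite_set _ (finite_image (Box a r) (fin_funs b f m))).
move=> A [[n ->] [_ Hn]]; exists n => //; split => j.
  move=> nj.
  have notF : `|x j| <= a / 2 by rewrite leNgt; apply/negP => h; apply: nj; apply: Ff.
  have /andP[h1 _] := Hn j.
  have xj0 := Xx.1 j.
  rewrite ger0_norm // in notF.
  suff : (n j < 1)%N by rewrite ltnS leqn0 => /eqP.
  rewrite -(ltr_nat R).
  have : (n j)%:R * a < 1 * a by lra.
  by rewrite ltr_pM2r.
have hxj := Xx.1 j; rewrite /b truncn_ge_nat; last by rewrite divr_ge0 // ltW.
rewrite ler_pdivlMr //.
by case/andP: (Hn j).
Qed.

Lemma Ucov_L a r : 0 < a -> 0 <= r -> (r%:E <= lebesgue_number d X (Ucov a r))%E.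
Proof.
move=> a0 r0; apply: ereal_sup_ubound; exists r => //; split => // E EX dE.
have [[e0 Ee0]|nE] := pselect (exists x, E x); last first.
  exists (Box a r (fun _ => 0%N)); first by eexists.
  by move=> x Ex; exfalso; apply: nE; exists x.
pose mk k := inf [set y k | y in E].
exists (Box a r (fun k => Num.truncn (mk k / a))); first by eexists.
move=> x Ex; split; first exact: EX.
move=> k.
have lb0 : has_lbound [set y k | y in E].
  by exists 0 => _ [y Ey <-]; exact: (EX _ Ey).1.
have m0 : 0 <= mk k.
  by apply: lb_le_inf; [exists (e0 k), e0|move=> _ [y Ey <-]; exact: (EX _ Ey).1].
have mx : mk k <= x k by apply: (ge_inf lb0); exists x.
have xm : x k - r <= mk k.
  apply: lb_le_inf; first by exists (e0 k), e0.
  move=> _ [y Ey <-].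
  have : (`|x k - y k|%:E < r%:E)%E.
    exact: le_lt_trans (sd_ge x y k) (le_lt_trans (diam_ge Ex Ey) dE).
  rewrite lte_fin ltr_norml => /andP[_ ?]; lra.
have [h1 h2] := @floor_box _ _ a0 m0.
apply/andP; split; lra.
Qed.

Lemma lower (U : set (set (K -> R))) r (k0 : K) : 0 <= r ->
  (r%:E <= lebesgue_number d X U)%E -> (r%:E <= cover_diam d U)%E.
Proof.
move=> r0 rL; apply/lee_subgt0Pr => e e0; rewrite -EFinB.
have [te|te] := boolP (r - e < 0).
  by apply: le_trans (cdiam_ge0 U); rewrite lee_fin ltW.
rewrite -leNgt in te.
move: te; set t := r - e => te.
have : (t%:E < lebesgue_number d X U)%E by apply: lt_le_trans rL; rewrite lte_fin /t; lra.
move=> /ereal_sup_gt [_ [s [s0 Hs] <-]] ts.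
pose v := fun k => if pselect (k = k0) then t else 0.
pose z := fun _ : K => (0:R).
pose E := [set y | y = z \/ y = v].
have Ebd : forall y, E y -> forall k, 0 <= y k <= t.
  move=> y [->|->] k; rewrite /z /v /=; last destruct (pselect (k = k0));
    apply/andP; split => //; lra.
have EX : E `<=` X.
  move=> y Ey; split; first by move=> k; have /andP[] := Ebd y Ey k.
  move=> eta eta0; apply: (sub_finite_set _ (finite_set1 k0)) => k /=.
  case: Ey => ->; rewrite /z /v.
    by rewrite normr0 => h; exfalso; lra.
  destruct (pselect (k = k0)) as [kk|nk]; first by move=> _.
  by rewrite normr0 => h; exfalso; lra.
have dE : (diam d E < s%:E)%E.
  apply: le_lt_trans ts; apply: diam_le => [|y y' Ey Ey' k]; first lra.
  have /andP[? ?] := Ebd y Ey k; have /andP[? ?] := Ebd y' Ey' k.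
  rewrite ler_norml; apply/andP; split; lra.
have [A UA EA] := Hs E EX dE.
apply: le_trans (cdiam_ge UA).
apply: le_trans (diam_ge (EA _ (or_introl erefl)) (EA _ (or_intror erefl))).
apply: le_trans (sd_ge z v k0).
rewrite /z /v; destruct (pselect (k0 = k0)) => //.
by rewrite lee_fin sub0r normrN ger0_norm.
Qed.

End Helpers.

Theorem proposition3p10 (R : realType) (K : Type) (hK : inhabited K)
  (r : R) (hr : 0 <= r) :
  Delta_c (@sup_dist R K) (@c0plus R K) r = (r%:E)%E.
Proof.
case: hK => k0.
apply/eqP; rewrite eq_le; apply/andP; split.
- apply/lee_addgt0Pr => a a0.
  apply: ge_ereal_inf; exists (cover_diam (@sup_dist R K) (Ucov a r)).
    exists (Ucov a r) => //; split; first exact: Ucov_cover.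
    by split; [exact: Ucov_pf|exact: Ucov_L].
  by rewrite -EFinD; apply: Ucov_diam.
- apply: le_ereal_inf_tmp => _ [U [_ [_ UL]] <-]; exact: lower k0 hr UL.
Qed.
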